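(* Let $\alpha\in(0,1)$, $\sigma=1-\frac{\alpha}{2}$, and let $c^{(\alpha,\sigma)}_{i,k}$ be the L2-1$_\sigma$ coefficients defined in the context. Let $k\ge0$. Then for sufficiently small temporal stepsize $\tau$: (1) for any one-dimensional grid functions $v^0,\dots,v^{k+1}\in\mathcal{U}_h$, $$\sum_{i=1}^{k+1}c^{(\alpha,\sigma)}_{i,k}\big(v^i-v^{i-1},\sigma v^{k+1}+(1-\sigma)v^k\big)_h\ge\frac12\sum_{i=1}^{k+1}c^{(\alpha,\sigma)}_{i,k}\big(\|v^i\|_h^2-\|v^{i-1}\|_h^2\big);$$ (2) for any two-dimensional grid functions $w^0,\dots,w^{k+1}\in\mathcal{S}^\circ_h$, $$\sum_{i=1}^{k+1}c^{(\alpha,\sigma)}_{i,k}\big(w^i-w^{i-1},\sigma w^{k+1}+(1-\sigma)w^k\big)_{h^2}\ge\frac12\sum_{i=1}^{k+1}c^{(\alpha,\sigma)}_{i,k}\big(\|w^i\|_{L^2_h}^2-\|w^{i-1}\|_{L^2_h}^2\big).$$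
   Context: Time grid: $\tilde a>0$, $T>\tilde a$, $N\in\mathbb{Z}^+$, $\tau=(T-\tilde a)/N$, $t_k=\tilde a+k\tau$, $t_{k+\sigma}=t_k+\sigma\tau$. For $1\le i\le k$: $a^{(\alpha,\sigma)}_{i,k}=(\log\frac{t_{k+\sigma}}{t_{i-1}})^{1-\alpha}-(\log\frac{t_{k+\sigma}}{t_{i}})^{1-\alpha}$, $b^{(\alpha,\sigma)}_{i,k}=\frac{1}{\log\frac{t_{i+1}}{t_{i-1}}}\{\frac{2}{2-\alpha}[(\log\frac{t_{k+\sigma}}{t_{i-1}})^{2-\alpha}-(\log\frac{t_{k+\sigma}}{t_{i}})^{2-\alpha}]-\log\frac{t_i}{t_{i-1}}[(\log\frac{t_{k+\sigma}}{t_{i}})^{1-\alpha}+(\log\frac{t_{k+\sigma}}{t_{i-1}})^{1-\alpha}]\}$. Coefficients: $c^{(\alpha,\sigma)}_{1,0}=\frac{(\log\frac{t_\sigma}{t_0})^{1-\alpha}}{\Gamma(2-\alpha)\log\frac{t_1}{t_0}}$; for $k\ge1$: $c^{(\alpha,\sigma)}_{1,k}=\frac{a^{(\alpha,\sigma)}_{1,k}-b^{(\alpha,\sigma)}_{1,k}}{\Gamma(2-\alpha)\log\frac{t_1}{t_0}}$, $c^{(\alpha,\sigma)}_{i,k}=\frac{a^{(\alpha,\sigma)}_{i,k}+b^{(\alpha,\sigma)}_{i-1,k}-b^{(\alpha,\sigma)}_{i,k}}{\Gamma(2-\alpha)\log\frac{t_i}{t_{i-1}}}$ for $2\le i\le k$,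 $c^{(\alpha,\sigma)}_{k+1,k}=\frac{b^{(\alpha,\sigma)}_{k,k}+(\log\frac{t_{k+\sigma}}{t_k})^{1-\alpha}}{\Gamma(2-\alpha)\log\frac{t_{k+1}}{t_k}}$. One-dimensional grid: $\mathcal{U}_h=\{w=(w_0,\dots,w_M)\}$ on $x_j=a+jh$, $h=(b-a)/M$; $(w,v)_h=h\sum_{j=1}^{M-1}w_jv_j$, $\|w\|_h^2=(w,w)_h$. Two-dimensional grid: $x_j=-L+jh$, $y_k=-L+kh$, $h=2L/M$; $\mathcal{S}^\circ_h$ is the set of grid functions $\{w_{jk}\}_{0\le j,k\le M}$ with $w_{jk}=0$ on the boundary points; $(w,v)_{h^2}=h^2\sum_{j=1}^{M-1}\sum_{k=1}^{M-1}w_{jk}v_{jk}$, $\|w\|^2_{L^2_h}=(w,w)_{h^2}$. *)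

(* Defs.v *)
From Stdlib Require Import Reals.
From Coquelicot Require Import Coquelicot.
Open Scope R_scope.

(* Euler Gamma function, for s > 1: Gamma s = lim_{n->oo} int_0^n x^(s-1) e^(-x) dx.
   (Rpower 0 _ = 1 in Stdlib, which only changes the integrand ta the single
   point x = 0 and hence does not affect the Riemann integral.) *)
Definition Gamma (s : R) : R :=
  real (Lim_seq (fun n : nat => RInt (fun x => Rpower x (s - 1) * exp (- x)) 0 (INR n))).

(* time grid (ta = tilde a): t_x = ta + x * tau, for real x (so that t_{k+sigma} makes sense) *)
Definition tgrid (ta tau x : R) : R := ta + x * tau.

Definition a_coef (alpha sigma ta tau : R) (i k : nat) : R :=
  let tks := tgrid ta tau (INR k + sigma) in
  Rpower (ln (tks / tgrid ta tau (INR (pred i)))) (1 - alpha)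
  - Rpower (ln (tks / tgrid ta tau (INR i))) (1 - alpha).

Definition b_coef (alpha sigma ta tau : R) (i k : nat) : R :=
  let tks := tgrid ta tau (INR k + sigma) in
  let tim1 := tgrid ta tau (INR (pred i)) in
  let ti := tgrid ta tau (INR i) in
  let tip1 := tgrid ta tau (INR (S i)) in
  / ln (tip1 / tim1) *
  (2 / (2 - alpha) *
     (Rpower (ln (tks / tim1)) (2 - alpha) - Rpower (ln (tks / ti)) (2 - alpha))
   - ln (ti / tim1) *
     (Rpower (ln (tks / ti)) (1 - alpha) + Rpower (ln (tks / tim1)) (1 - alpha))).

(* c^{(alpha,sigma)}_{i,k}, 1 <= i <= k+1 (value 0 outside this range, never used) *)
Definition c_coef (alpha sigma ta tau : R) (i k : nat) : R :=
  let G := Gamma (2 - alpha) in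
  let t := tgrid ta tau in
  match k with
  | O =>
      if Nat.eqb i 1 then
        Rpower (ln (t sigma / t 0)) (1 - alpha) / (G * ln (t 1 / t 0))
      else 0
  | S _ =>
      if Nat.eqb i 1 then
        (a_coef alpha sigma ta tau 1 k - b_coef alpha sigma ta tau 1 k)
          / (G * ln (t 1 / t 0))
      else if andb (2 <=? i)%nat (i <=? k)%nat then
        (a_coef alpha sigma ta tau i k + b_coef alpha sigma ta tau (pred i) k
           - b_coef alpha sigma ta tau i k)
          / (G * ln (t (INR i) / t (INR (pred i))))
      else if Nat.eqb i (S k) then
        (b_coef alpha sigma ta tau k k
           + Rpower (ln (t (INR k + sigma) / t (INR k))) (1 - alpha))
          / (G * ln (t (INR (S k)) / t (INR k)))
      else 0
  end.

(* 1D grid functions on x_0..x_M are represented as u : nat -> R (only indices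
   0..M matter); discrete inner product (u,v)_h = h * sum_{j=1}^{M-1} u_j v_j *)
Definition ip1 (h : R) (M : nat) (u v : nat -> R) : R :=
  h * sum_n_m (fun j => u j * v j) 1 (M - 1).

(* 2D grid functions w_{jl}, 0 <= j,l <= M, as w : nat -> nat -> R;
   (u,v)_{h^2} = h^2 * sum_{j=1}^{M-1} sum_{l=1}^{M-1} u_{jl} v_{jl} *)
Definition ip2 (h : R) (M : nat) (u v : nat -> nat -> R) : R :=
  h ^ 2 * sum_n_m (fun j => sum_n_m (fun l => u j l * v j l) 1 (M - 1)) 1 (M - 1).

(* membership in S°_h: vanishes ta the boundary grid points *)
Definition zero_boundary (M : nat) (w : nat -> nat -> R) : Prop :=
  forall j l : nat, (j <= M)%nat -> (l <= M)%nat ->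
    (j = 0 \/ j = M \/ l = 0 \/ l = M)%nat -> w j l = 0.

(* Main.v *)
Require Import Defs.
From Stdlib Require Import Reals Lra Lia Psatz Arith Bool FunctionalExtensionality.
From Coquelicot Require Import Coquelicot.
Open Scope R_scope.

Lemma sR_plus (f g : nat -> R) n m : sum_n_m (fun i => f i + g i) n m = sum_n_m f n m + sum_n_m g n m.
Proof. exact (sum_n_m_plus f g n m). Qed.
Lemma sR_scal a (f : nat -> R) n m : sum_n_m (fun i => a * f i) n m = a * sum_n_m f n m.
Proof. exact (sum_n_m_mult_l a f n m). Qed.
Lemma sR_minus (f g : nat -> R) n m : sum_n_m (fun i => f i - g i) n m = sum_n_m f n m - sum_n_m g n m.
Proof.
  replace (sum_n_m f n m - sum_n_m g n m) with (sum_n_m f n m + (-1) * sum_n_m g n m) by ring.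
  rewrite <- sR_scal, <- sR_plus. apply sum_n_m_ext_loc; intros k _; change (f k - g k = f k + -1 * g k); ring.
Qed.
Lemma sR_Sm (f : nat -> R) n m : (n <= S m)%nat -> sum_n_m f n (S m) = sum_n_m f n m + f (S m).
Proof. intros; exact (sum_n_Sm f n m H). Qed.
Lemma sR_one (f : nat -> R) n : sum_n_m f n n = f n.
Proof. exact (sum_n_n f n). Qed.
Lemma sR_ext (f g : nat -> R) n m : (forall k, (n <= k <= m)%nat -> f k = g k) -> sum_n_m f n m = sum_n_m g n m.
Proof. apply sum_n_m_ext_loc. Qed.
Lemma sR_nonneg (f : nat -> R) n m : (forall k, (n <= k <= m)%nat -> 0 <= f k) -> 0 <= sum_n_m f n m.
Proof.
  intros H. destruct (le_lt_dec n m) as [Hl|Hl].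
  - revert H Hl. induction m; intros H Hl.
    + assert (n = 0)%nat by lia. subst. rewrite sR_one. apply H; lia.
    + destruct (Nat.eq_dec n (S m)). subst. rewrite sR_one; apply H; lia.
      rewrite sR_Sm by lia. assert (0 <= f (S m)) by (apply H; lia).
      assert (0 <= sum_n_m f n m) by (apply IHm; [intros; apply H; lia| lia]). lra.
  - rewrite sum_n_m_zero by exact Hl. apply Rle_refl.
Qed.

Lemma abel_bound (c V : nat -> R) (L : R) n : (1 <= n)%nat -> 0 <= c 1%nat ->
  (forall i, (2 <= i <= n)%nat -> c (pred i) <= c i) -> (forall i, V i >= - L) ->
  sum_n_m (fun i => c i * (V i - V (S i))) 1 n + c n * V (S n) >= - L * c n.
Proof.
  intros Hn Hc1 Hmon HV. induction n. lia.
  destruct n.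
  - rewrite sR_one. specialize (HV 1%nat). nra.
  - rewrite sR_Sm by lia.
    assert (IH := IHn ltac:(lia) ltac:(intros; apply Hmon; lia)).
    assert (Hm := Hmon (S (S n)) ltac:(lia)). simpl pred in Hm.
    specialize (HV (S (S n))). nra.
Qed.

Lemma scalar_ineq (c y : nat -> R) (s : R) k : 1/2 <= s -> 0 <= c 1%nat ->
  (forall i, (2 <= i <= k)%nat -> c (pred i) <= c i) ->
  ((1 <= k)%nat -> s * s * c k <= (2 * s - 1) * c (S k)) ->
  sum_n_m (fun i => c i * ((y i - y (pred i)) * (s * y (S k) + (1 - s) * y k))) 1 (S k)
  - 1/2 * sum_n_m (fun i => c i * (y i * y i - y (pred i) * y (pred i))) 1 (S k) >= 0.
Proof.
  intros Hs Hc1 Hmon Hlast.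
  rewrite <- sR_scal, <- sR_minus.
  set (x := y (S k) - y k).
  set (V := fun i => s * x * (y k - y (pred i)) + (y k - y (pred i)) * (y k - y (pred i)) / 2).
  rewrite sR_Sm by lia.
  destruct k.
  - rewrite sum_n_m_zero by lia. simpl. unfold zero; simpl. fold x.
    assert (Heq : c 1%nat * (x * (s * y 1%nat + (1 - s) * y 0%nat)) -
   1 / 2 * (c 1%nat * (y 1%nat * y 1%nat - y 0%nat * y 0%nat)) = c 1%nat * ((s-1/2)*(x*x))) by (unfold x; field).
    rewrite Heq. assert (0 <= x * x) by nra. assert (0 <= (s-1/2)*(x*x)) by nra. nra.
  - rewrite (sR_ext _ (fun i => c i * (V i - V (S i)))).
    2:{ intros i Hi. unfold V. destruct i. lia. simpl pred. unfold x. field. }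
    assert (HA := abel_bound c V (s * s * x * x / 2) (S k) ltac:(lia) Hc1 Hmon).
    assert (HV : forall i, V i >= - (s * s * x * x / 2)).
    { intros i; unfold V; cbv beta. assert (0 <= (y (S k) - y (pred i) + s*x)^2) by (apply pow2_ge_0). nra. }
    specialize (HA HV).
    assert (HV0 : V (S (S k)) = 0). { unfold V. simpl pred. field. }
    rewrite HV0 in HA.
    specialize (Hlast ltac:(lia)).
    simpl pred.
    assert (Heq : c (S (S k)) * ((y (S (S k)) - y (S k)) * (s * y (S (S k)) + (1 - s) * y (S k))) -
       1 / 2 * (c (S (S k)) * (y (S (S k)) * y (S (S k)) - y (S k) * y (S k))) = c (S (S k)) * ((s-1/2)*(x*x))) by (unfold x; field).
    rewrite Heq.
    assert (0 <= x * x) by nra.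
    assert (c (S k) * (x*x) <= (2*s-1)/(s*s) * c (S (S k)) * (x*x)) .
    { apply Rmult_le_compat_r. lra. apply (Rmult_le_reg_l (s*s)). nra.
      replace (s * s * ((2 * s - 1) / (s * s) * c (S (S k)))) with ((2*s-1) * c (S (S k))) by (field; lra). lra. }
    assert (s * s * (c (S k) * (x * x)) <= (2 * s - 1) * c (S (S k)) * (x*x)).
    { replace ((2 * s - 1) * c (S (S k)) * (x*x)) with (s*s * ((2 * s - 1) / (s * s) * c (S (S k)) * (x * x))) by (field; lra).
      apply Rmult_le_compat_l; nra. }
    nra.
Qed.

Section Lift.
Variable X : Type.
Variable Lam : (X -> R) -> R.
Hypothesis Hadd : forall f g, Lam (fun x => f x + g x) = Lam f + Lam g.
Hypothesis Hscal : forall a f, Lam (fun x => a * f x) = a * Lam f.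
Hypothesis Hpos : forall f, (forall x, 0 <= f x) -> 0 <= Lam f.
Hypothesis Hext : forall f g, (forall x, f x = g x) -> Lam f = Lam g.

Lemma Lam_zero : Lam (fun _ => 0) = 0.
Proof.
  rewrite (Hext _ (fun x => 0 * (fun _ => 0) x)) by (intros; ring).
  rewrite Hscal. ring.
Qed.

Lemma Lam_sum (F : nat -> X -> R) a b :
  Lam (fun x => sum_n_m (fun i => F i x) a b) = sum_n_m (fun i => Lam (F i)) a b.
Proof.
  induction b.
  - destruct a.
    + rewrite sR_one. apply Hext; intros; rewrite sR_one; auto.
    + rewrite sum_n_m_zero by lia.
      rewrite (Hext _ (fun _ => 0)). apply Lam_zero.
      intros; rewrite sum_n_m_zero by lia. reflexivity.
  - destruct (le_lt_dec a (S b)).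
    + rewrite sR_Sm by lia. rewrite (Hext _ (fun x => sum_n_m (fun i => F i x) a b + F (S b) x)).
      rewrite Hadd, IHb. reflexivity.
      intros; rewrite sR_Sm by lia; reflexivity.
    + rewrite sum_n_m_zero by lia.
      rewrite (Hext _ (fun _ => 0)). apply Lam_zero.
      intros; rewrite sum_n_m_zero by lia. reflexivity.
Qed.

Lemma lift_ineq (K : R) (HK : 0 <= K) (c : nat -> R) (y : nat -> X -> R) s k :
  1/2 <= s -> 0 <= c 1%nat ->
  (forall i, (2 <= i <= k)%nat -> c (pred i) <= c i) ->
  ((1 <= k)%nat -> s * s * c k <= (2 * s - 1) * c (S k)) ->
  sum_n_m (fun i => c i * (K * Lam (fun x => (y i x - y (pred i) x) * (s * y (S k) x + (1 - s) * y k x)))) 1 (S k)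
  >= 1/2 * sum_n_m (fun i => c i * (K * Lam (fun x => y i x * y i x) - K * Lam (fun x => y (pred i) x * y (pred i) x))) 1 (S k).
Proof.
  intros Hs Hc1 Hmon Hlast.
  rewrite (sR_ext _ (fun i => K * Lam (fun x => c i * ((y i x - y (pred i) x) * (s * y (S k) x + (1 - s) * y k x))))).
  2:{ intros; rewrite Hscal; ring. }
  rewrite (sR_ext (fun i => c i * (K * Lam (fun x => y i x * y i x) - K * Lam (fun x => y (pred i) x * y (pred i) x)))
     (fun i => K * Lam (fun x => c i * (y i x * y i x - y (pred i) x * y (pred i) x)))).
  2:{ intros i _. rewrite Hscal.
      rewrite (Hext (fun x => y i x * y i x - y (pred i) x * y (pred i) x) (fun x => y i x * y i x + (-1) * (y (pred i) x * y (pred i) x))) by (intros; ring).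
      rewrite Hadd, Hscal. ring. }
  rewrite !sR_scal, <- !Lam_sum.
  apply Rle_ge. apply Rminus_le_0.
  replace (K * Lam (fun x => sum_n_m (fun i => c i * ((y i x - y (pred i) x) * (s * y (S k) x + (1 - s) * y k x))) 1 (S k)) -
    1 / 2 * (K * Lam (fun x => sum_n_m (fun i => c i * (y i x * y i x - y (pred i) x * y (pred i) x)) 1 (S k))))
  with (K * (Lam (fun x => sum_n_m (fun i => c i * ((y i x - y (pred i) x) * (s * y (S k) x + (1 - s) * y k x))) 1 (S k)) +
    (- (1/2)) * Lam (fun x => sum_n_m (fun i => c i * (y i x * y i x - y (pred i) x * y (pred i) x)) 1 (S k)))) by field.
  rewrite <- Hscal, <- Hadd.
  apply Rmult_le_pos; auto. apply Hpos. intros x.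
  assert (H := scalar_ineq c (fun i => y i x) s k Hs Hc1 Hmon Hlast). cbv beta in H. lra.
Qed.
End Lift.

Lemma Rpower_pos x a : 0 < Rpower x a.
Proof. unfold Rpower. apply exp_pos. Qed.

Lemma D_R e x : 0 < x -> Derive (fun y => Rpower y e) x = e * Rpower x (e - 1).
Proof. intros Hx. apply is_derive_unique. apply is_derive_Reals. apply derivable_pt_lim_power. exact Hx. Qed.

Lemma ED_R e x : 0 < x -> ex_derive (fun y => Rpower y e) x.
Proof. intros Hx. exists (e * Rpower x (e - 1)). apply is_derive_Reals. apply derivable_pt_lim_power. exact Hx. Qed.

Lemma incr_strict (H h : R -> R) a b : a < b -> (forall t, a <= t <= b -> is_derive H t (h t)) ->
  (forall t, a < t < b -> 0 < h t) -> H a < H b.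
Proof.
  intros Hab Hd Hp. destruct (MVT_cor2 H h a b Hab) as [c [Hc1 Hc2]].
  intros c Hc. apply is_derive_Reals. auto.
  specialize (Hp c Hc2). nra.
Qed.

Lemma incr_weak (H h : R -> R) a b : a < b -> (forall t, a <= t <= b -> is_derive H t (h t)) ->
  (forall t, a < t < b -> 0 <= h t) -> H a <= H b.
Proof.
  intros Hab Hd Hp. destruct (MVT_cor2 H h a b Hab) as [c [Hc1 Hc2]].
  intros c Hc. apply is_derive_Reals. auto.
  specialize (Hp c Hc2). nra.
Qed.

Lemma Rpower_neg_decr e u v : 0 < e -> 0 < u < v -> Rpower v (- e) < Rpower u (- e).
Proof.
  intros He Huv. rewrite !Rpower_Ropp. apply Rinv_lt_contravar.
  apply Rmult_lt_0_compat; apply Rpower_pos. apply Rlt_Rpower_l; lra.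
Qed.

Section Unif.
Variable al : R.
Hypothesis Hal : 0 < al < 1.

Definition Fp x := Rpower x (1 - al).
Definition fp x := (1 - al) * Rpower x (- al).
Definition fpp x := (1 - al) * (- al) * Rpower x (- al - 1).
Definition Phi x := Rpower x (2 - al) / (2 - al).
Definition Af y := Fp (y + 1) - Fp y.
Definition Bf y := Phi (y + 1) - Phi y - (Fp (y + 1) + Fp y) / 2.

Lemma dFp x : 0 < x -> is_derive Fp x (fp x).
Proof.
  intros Hx. unfold Fp, fp. apply is_derive_Reals.
  replace (- al) with (1 - al - 1) by ring. apply derivable_pt_lim_power. exact Hx.
Qed.

Lemma dfp x : 0 < x -> is_derive fp x (fpp x).
Proof.
  intros Hx. unfold fpp, fp. rewrite Rmult_assoc. apply is_derive_scal. apply is_derive_Reals.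
  replace (- al - 1) with (- al - 1) by ring. apply derivable_pt_lim_power. exact Hx.
Qed.

Lemma fp_decr u v : 0 < u < v -> fp v < fp u.
Proof.
  intros Huv. unfold fp. apply Rmult_lt_compat_l. lra. apply Rpower_neg_decr; lra.
Qed.

Lemma fpp_incr u v : 0 < u < v -> fpp u < fpp v.
Proof.
  intros Huv. unfold fpp.
  replace (- al - 1) with (- (al + 1)) by ring.
  assert (Rpower v (- (al+1)) < Rpower u (- (al+1))) by (apply Rpower_neg_decr; lra).
  assert (0 < (1 - al) * al) by nra. nra.
Qed.

Lemma fp_pos x : 0 < fp x.
Proof. unfold fp. apply Rmult_lt_0_compat. lra. apply Rpower_pos. Qed.

Lemma g_decr u v : 0 < u -> u <= v <= u + 1 -> fp v - fp (v + 1) <= fp u - fp (u + 1).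
Proof.
  intros Hu Huv. destruct (Req_dec u v) as [E|E]. subst; lra.
  destruct (MVT_cor2 fp fpp u v) as [c1 [E1 H1]]. lra.
  intros c Hc. apply is_derive_Reals. apply dfp. lra.
  destruct (MVT_cor2 fp fpp (u+1) (v+1)) as [c2 [E2 H2]]. lra.
  intros c Hc. apply is_derive_Reals. apply dfp. lra.
  assert (fpp c1 < fpp c2) by (apply fpp_incr; lra).
  replace (v + 1 - (u + 1)) with (v - u) in E2 by ring. nra.
Qed.

Ltac dsolve := unfold Fp, Phi, fp; auto_derive;
  [ repeat first [ split | exact I | apply ED_R; lra ]
  | rewrite ?D_R by lra;
    try replace (2 - al - 1) with (1 - al) by ring;
    try replace (1 - al - 1) with (- al) by ring;
    unfold Rminus; field; lra ].

Lemma Bf_pos y : 0 < y -> 0 < Bf y.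
Proof.
  intros Hy.
  assert (HH := incr_strict
    (fun s => - s * Fp (y + 1/2 - s) - Phi (y + 1/2 - s) - s * Fp (y+1/2+s) + Phi (y+1/2+s))
    (fun s => s * fp (y+1/2-s) - s * fp (y+1/2+s)) 0 (1/2) ltac:(lra)).
  cbv beta in HH. 
  assert (H1 : forall t, 0 <= t <= 1/2 -> is_derive
    (fun s => - s * Fp (y + 1/2 - s) - Phi (y + 1/2 - s) - s * Fp (y+1/2+s) + Phi (y+1/2+s)) t
    (t * fp (y+1/2-t) - t * fp (y+1/2+t))).
  { intros t Ht. dsolve. }
  assert (H2 : forall t, 0 < t < 1/2 -> 0 < t * fp (y+1/2-t) - t * fp (y+1/2+t)).
  { intros t Ht. assert (fp (y+1/2+t) < fp (y+1/2-t)) by (apply fp_decr; lra). nra. }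
  specialize (HH H1 H2).
  replace (y + 1/2 - 1/2) with y in HH by field. replace (y + 1/2 + 1/2) with (y+1) in HH by field.
  replace (y + 1/2 - 0) with (y + 1/2) in HH by field. replace (y + 1/2 + 0) with (y + 1/2) in HH by field.
  unfold Bf. lra.
Qed.

Lemma Bf_decr y : 0 < y -> Bf (y + 1) <= Bf y.
Proof.
  intros Hy.
  assert (HH := incr_weak
    (fun s => (- s * Fp (y + 1/2 - s) - Phi (y + 1/2 - s) - s * Fp (y+1/2+s) + Phi (y+1/2+s))
             - (- s * Fp (y + 3/2 - s) - Phi (y + 3/2 - s) - s * Fp (y+3/2+s) + Phi (y+3/2+s)))
    (fun s => (s * fp (y+1/2-s) - s * fp (y+1/2+s)) - (s * fp (y+3/2-s) - s * fp (y+3/2+s))) 0 (1/2) ltac:(lra)).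
  cbv beta in HH.
  assert (H1 : forall t, 0 <= t <= 1/2 -> is_derive
    (fun s => (- s * Fp (y + 1/2 - s) - Phi (y + 1/2 - s) - s * Fp (y+1/2+s) + Phi (y+1/2+s))
             - (- s * Fp (y + 3/2 - s) - Phi (y + 3/2 - s) - s * Fp (y+3/2+s) + Phi (y+3/2+s))) t
    ((t * fp (y+1/2-t) - t * fp (y+1/2+t)) - (t * fp (y+3/2-t) - t * fp (y+3/2+t)))).
  { intros t Ht. dsolve. }
  assert (H2 : forall t, 0 < t < 1/2 -> 0 <= (t * fp (y+1/2-t) - t * fp (y+1/2+t)) - (t * fp (y+3/2-t) - t * fp (y+3/2+t))).
  { intros t Ht. assert (G := g_decr (y + 1/2 - t) (y + 1/2 + t) ltac:(lra) ltac:(lra)).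
    replace (y + 1/2 - t + 1) with (y + 3/2 - t) in G by field.
    replace (y + 1/2 + t + 1) with (y + 3/2 + t) in G by field. nra. }
  specialize (HH H1 H2).
  replace (y + 1/2 - 1/2) with y in HH by field. replace (y + 1/2 + 1/2) with (y+1) in HH by field.
  replace (y + 3/2 - 1/2) with (y+1) in HH by field. replace (y + 3/2 + 1/2) with (y+1+1) in HH by field.
  replace (y + 1/2 - 0) with (y + 1/2) in HH by field. replace (y + 1/2 + 0) with (y + 1/2) in HH by field.
  replace (y + 3/2 - 0) with (y + 3/2) in HH by field. replace (y + 3/2 + 0) with (y + 3/2) in HH by field.
  unfold Bf. lra.
Qed.

Lemma AB_pos y : 0 < y -> 0 < Af y - Bf y.
Proof.
  intros Hy.
  assert (HH := incr_strict (fun t => Fp (y + t) * (1/2 + t) - Phi (y + t))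
     (fun t => fp (y + t) * (1/2 + t)) 0 1 ltac:(lra)).
  cbv beta in HH.
  assert (H1 : forall t, 0 <= t <= 1 -> is_derive (fun t => Fp (y + t) * (1/2 + t) - Phi (y + t)) t (fp (y + t) * (1/2 + t))).
  { intros t Ht. dsolve. }
  assert (H2 : forall t, 0 < t < 1 -> 0 < fp (y + t) * (1/2 + t)).
  { intros t Ht. assert (H := fp_pos (y + t)). nra. }
  specialize (HH H1 H2). rewrite Rplus_0_r in HH.
  unfold Af, Bf. lra.
Qed.

Lemma E_pos y : 0 < y -> 0 < Af y - Af (y + 1) + 2 * Bf (y + 1) - Bf y - Bf (y + 1 + 1).
Proof.
  intros Hy.
  set (H := fun t => Fp (y + t) * (1/2 + t) - Phi (y + t) - (Fp (y + 1 + t) * (1/2 + t) - Phi (y + 1 + t))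
     + (Fp (y + 1 + t) * (1/2 - t) + Phi (y + 1 + t)) - (Fp (y + 1 + 1 + t) * (1/2 - t) + Phi (y + 1 + 1 + t))).
  set (h := fun t => (fp (y + t) - fp (y + 1 + t)) * (1/2 + t) + (fp (y + 1 + t) - fp (y + 1 + 1 + t)) * (1/2 - t)).
  assert (HH := incr_strict H h 0 1 ltac:(lra)).
  assert (H1 : forall t, 0 <= t <= 1 -> is_derive H t (h t)).
  { intros t Ht. unfold H, h. dsolve. }
  assert (H2 : forall t, 0 < t < 1 -> 0 < h t).
  { intros t Ht. unfold h.
    assert (G := g_decr (y + t) (y + t + 1) ltac:(lra) ltac:(lra)).
    replace (y + t + 1) with (y + 1 + t) in G by ring.
    replace (y + 1 + t + 1) with (y + 1 + 1 + t) in G by ring.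
    assert (fp (y + 1 + 1 + t) < fp (y + 1 + t)) by (apply fp_decr; lra).
    assert (fp (y + 1 + t) < fp (y + t)) by (apply fp_decr; lra).
    destruct (Rle_dec t (1/2)); nra. }
  specialize (HH H1 H2). unfold H in HH. rewrite !Rplus_0_r in HH.
  unfold Af, Bf. lra.
Qed.

Lemma last_ineq s : 0 < s < 1 -> s * s * Af s < (1 - al) * (Bf s + Fp s).
Proof.
  intros Hs.
  destruct (MVT_cor2 Fp fp s (s + 1)) as [c [E1 H1]]. lra.
  intros c Hc. apply is_derive_Reals. apply dFp. lra.
  assert (Hc : fp c < fp s) by (apply fp_decr; lra).
  assert (HB := Bf_pos s ltac:(lra)).
  assert (HF : (1 - al) * Fp s = s * fp s).
  { unfold Fp, fp. replace (1 - al) with (1 + - al) at 2 by ring. rewrite Rpower_plus, Rpower_1 by lra. ring. }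
  assert (Hfc := fp_pos c).
  unfold Af. replace (s + 1 - s) with 1 in E1 by ring. rewrite E1.
  assert (0 <= s * (1 - s) * fp c) by (apply Rmult_le_pos; [nra|lra]).
  assert (s * s * fp c <= s * fp c) by nra.
  assert (s * fp c < s * fp s) by nra. nra.
Qed.
End Unif.


Lemma Gamma_nonneg s : 1 < s -> 0 <= Gamma s.
Proof.
  intros Hs. set (a := s - 1). assert (Ha : 0 < a) by (unfold a; lra).
  set (f := fun x => Rpower x (s - 1) * exp (- x)).
  set (g := fun x => if Rle_dec x 0 then 0 else Rpower x a * exp (- x)).
  assert (Hc0 : continuous g 0).
  { apply continuity_pt_filterlim.
    unfold continuity_pt, continue_in, limit1_in, limit_in. intros eps Heps.
    exists (Rpower eps (/ a)). split. apply Rpower_pos.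
    intros x [_ Hx]. simpl in Hx. unfold R_dist in *. unfold g.
    destruct (Rle_dec 0 0) as [_|n0]; [|lra].
    simpl dist; unfold R_dist. rewrite Rminus_0_r in *.
    destruct (Rle_dec x 0). rewrite Rabs_R0. lra.
    idtac.
    assert (Hx0 : 0 < x) by lra. rewrite Rabs_right in Hx by lra.
    assert (Hp := Rpower_pos x a). assert (He : 0 < exp (-x)) by apply exp_pos.
    rewrite Rabs_right by nra.
    assert (H1 : Rpower x a < Rpower (Rpower eps (/ a)) a) by (apply Rlt_Rpower_l; lra).
    rewrite Rpower_mult, Rinv_l, Rpower_1 in H1 by lra.
    assert (H2 : exp (- x) < 1) by (rewrite <- exp_0; apply exp_increasing; lra).
    nra. }
  assert (Hcz : forall z, 0 < z -> continuous g z).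
  { intros z Hz. apply continuity_pt_filterlim.
    apply (continuity_pt_locally_ext (fun x => Rpower x a * exp (- x)) g z z Hz).
    { intros y Hy. unfold Rdist in Hy. unfold g. destruct (Rle_dec y 0).
      rewrite Rabs_left1 in Hy; lra. reflexivity. }
    assert (Hd : continuous (fun x => Rpower x a * exp (- x)) z).
    { apply (ex_derive_continuous (fun x => Rpower x a * exp (- x))).
      apply (ex_derive_mult (fun x => Rpower x a) (fun x => exp (-x))).
      - exists (a * Rpower z (a - 1)). apply is_derive_Reals. apply derivable_pt_lim_power. exact Hz.
      - auto_derive. auto. }
    apply continuity_pt_filterlim. exact Hd. }
  assert (Hu : forall n, 0 <= RInt f 0 (INR n)).
  { intros n. destruct n. simpl. rewrite RInt_point. apply Rle_refl.
    assert (Hn : 0 < INR (S n)) by (apply lt_0_INR; lia).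
    assert (Hex : ex_RInt g 0 (INR (S n))).
    { apply (@ex_RInt_continuous R_CompleteNormedModule). intros z Hz. rewrite Rmin_left, Rmax_right in Hz by lra.
      destruct (Req_dec z 0). subst; auto. apply Hcz. lra. }
    apply RInt_ge_0. lra.
    - apply (ex_RInt_ext g). intros x Hx. rewrite Rmin_left, Rmax_right in Hx by lra.
      unfold g, f. destruct (Rle_dec x 0). lra. reflexivity. exact Hex.
    - intros x Hx. unfold f. assert (Hp := Rpower_pos x (s-1)). assert (He : 0 < exp (-x)) by apply exp_pos. nra. }
  unfold Gamma. fold f.
  assert (HL := Lim_seq_le_loc (fun _ => 0) (fun n => RInt f 0 (INR n))).
  rewrite Lim_seq_const in HL.
  assert (HL' : Rbar_le 0 (Lim_seq (fun n => RInt f 0 (INR n)))).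
  { apply HL. exists 0%nat. intros; apply Hu. }
  destruct (Lim_seq (fun n => RInt f 0 (INR n))); simpl in *; lra.
Qed.

Definition Ad al (d : nat -> R) i := Rpower (d (pred i)) (1-al) - Rpower (d i) (1-al).
Definition Bd al (d : nat -> R) i := / (d (pred i) - d (S i)) *
  (2 / (2 - al) * (Rpower (d (pred i)) (2-al) - Rpower (d i) (2-al))
   - (d (pred i) - d i) * (Rpower (d i) (1-al) + Rpower (d (pred i)) (1-al))).
Definition Cd al k (d : nat -> R) i :=
  if Nat.eqb i 1 then (Ad al d 1 - Bd al d 1) / (d 0%nat - d 1%nat)
  else if andb (2 <=? i)%nat (i <=? k)%nat then (Ad al d i + Bd al d (pred i) - Bd al d i) / (d (pred i) - d i)
  else if Nat.eqb i (S k) then (Bd al d k + Rpower (d k) (1-al)) / (d k - d (S k))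
  else 0.

Lemma lnratio x y z : 0 < x -> 0 < y -> 0 < z -> ln (x / y) = ln (z / y) - ln (z / x).
Proof. intros. rewrite !ln_div by lra. ring. Qed.

Lemma tgrid_pos ta tau x : 0 < ta -> 0 < tau -> 0 <= x -> 0 < tgrid ta tau x.
Proof. intros. unfold tgrid. nra. Qed.

Lemma div_G X G l : X / (G * l) = / G * (X / l).
Proof. unfold Rdiv. rewrite Rinv_mult. ring. Qed.

Lemma c_coef_eq al sg ta tau k i : 0 < ta -> 0 < tau -> 0 < sg ->
  let D := fun j => ln (tgrid ta tau (INR (S k) + sg) / tgrid ta tau (INR j)) in
  c_coef al sg ta tau i (S k) = / Gamma (2 - al) * Cd al (S k) D i.
Proof.
  intros Hta Htau Hsg D.
  assert (Ht : forall x, 0 <= x -> 0 < tgrid ta tau x) by (intros; apply tgrid_pos; auto).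
  assert (Hks : 0 < tgrid ta tau (INR (S k) + sg)) by (apply Ht; assert (0 <= INR (S k)) by apply pos_INR; lra).
  assert (HD : forall a b, ln (tgrid ta tau (INR a) / tgrid ta tau (INR b)) = D b - D a).
  { intros a b. unfold D. apply lnratio; first [exact Hks | apply Ht; apply pos_INR]. }
  assert (Hb : forall j, b_coef al sg ta tau j (S k) = Bd al D j).
  { intros j. unfold b_coef, Bd. cbv zeta. rewrite !HD. reflexivity. }
  assert (Ha : forall j, a_coef al sg ta tau j (S k) = Ad al D j).
  { intros j. reflexivity. }
  unfold c_coef, Cd. cbv zeta. rewrite !Hb, !Ha.
  destruct (Nat.eqb i 1).
  - rewrite div_G. f_equal. f_equal. apply (HD 1%nat 0%nat).
  - destruct (andb _ _).
    + rewrite div_G, HD. reflexivity.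
    + destruct (Nat.eqb i (S (S k))).
      * rewrite div_G, HD. reflexivity.
      * rewrite Rmult_0_r. reflexivity.
Qed.

Lemma Rp_mul lam x e : 0 < lam -> 0 < x -> Rpower (lam * x) e = Rpower lam e * Rpower x e.
Proof. intros. symmetry. apply Rpower_mult_distr; auto. Qed.

Lemma Rp_Q lam al : 0 < lam -> Rpower lam (2 - al) = lam * Rpower lam (1 - al).
Proof. intros. replace (2 - al) with (1 + (1 - al)) by ring. rewrite Rpower_plus, Rpower_1 by auto. ring. Qed.

Lemma Ad_hom al d lam i : 0 < lam -> 0 < d (pred i) -> 0 < d i ->
  Ad al (fun j => lam * d j) i = Rpower lam (1-al) * Ad al d i.
Proof. intros. unfold Ad. rewrite !Rp_mul by auto. ring. Qed.

Lemma Bd_hom al d lam i : 0 < lam -> 0 < d (pred i) -> 0 < d i -> al < 2 ->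
  Bd al (fun j => lam * d j) i = Rpower lam (1-al) * Bd al d i.
Proof.
  intros. unfold Bd. rewrite !Rp_mul by auto. rewrite !Rp_Q by auto.
  replace (lam * d (pred i) - lam * d (S i)) with (lam * (d (pred i) - d (S i))) by ring.
  rewrite Rinv_mult. set (iD := / (d (pred i) - d (S i))). field. split; lra.
Qed.

Lemma Cd_hom al k d lam i : 0 < lam -> (1 <= k)%nat -> (forall j, (j <= k)%nat -> 0 < d j) -> 0 < al < 1 ->
  Cd al k (fun j => lam * d j) i = Rpower lam (1-al) / lam * Cd al k d i.
Proof.
  intros Hl Hk Hd Hal. unfold Cd.
  destruct (Nat.eqb i 1) eqn:E1.
  - rewrite Ad_hom, Bd_hom by (try apply Hd; simpl; lia || lra).
    replace (lam * d 0%nat - lam * d 1%nat) with (lam * (d 0%nat - d 1%nat)) by ring.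
    unfold Rdiv. rewrite Rinv_mult. set (iD := / (d 0%nat - d 1%nat)). field. lra.
  - destruct (andb _ _) eqn:E2.
    + apply andb_true_iff in E2. destruct E2 as [E2 E3]. apply Nat.leb_le in E2, E3.
      rewrite Ad_hom, !Bd_hom by (try apply Hd; lia || lra).
      replace (lam * d (pred i) - lam * d i) with (lam * (d (pred i) - d i)) by ring.
      unfold Rdiv. rewrite Rinv_mult. set (iD := / (d (pred i) - d i)). field. lra.
    + destruct (Nat.eqb i (S k)).
      * rewrite !Bd_hom by (try apply Hd; lia || lra). rewrite Rp_mul by (try apply Hd; lia || lra).
        replace (lam * d k - lam * d (S k)) with (lam * (d k - d (S k))) by ring.
        unfold Rdiv. rewrite Rinv_mult. set (iD := / (d k - d (S k))). field. lra.
      * ring.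
Qed.

Lemma lim_plus u v (a b : R) : is_lim_seq u a -> is_lim_seq v b -> is_lim_seq (fun n => u n + v n) (a + b).
Proof. apply is_lim_seq_plus'. Qed.
Lemma lim_minus u v (a b : R) : is_lim_seq u a -> is_lim_seq v b -> is_lim_seq (fun n => u n - v n) (a - b).
Proof. apply is_lim_seq_minus'. Qed.
Lemma lim_mult u v (a b : R) : is_lim_seq u a -> is_lim_seq v b -> is_lim_seq (fun n => u n * v n) (a * b).
Proof. apply is_lim_seq_mult'. Qed.
Lemma lim_inv u (a : R) : is_lim_seq u a -> a <> 0 -> is_lim_seq (fun n => / u n) (/ a).
Proof.
  intros H Ha. apply (is_lim_seq_inv u a) in H. exact H.
  intros E. injection E. auto.
Qed.
Lemma lim_div u v (a b : R) : is_lim_seq u a -> is_lim_seq v b -> b <> 0 -> is_lim_seq (fun n => u n / v n) (a / b).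
Proof. intros. apply lim_mult; auto. apply lim_inv; auto. Qed.
Lemma lim_Rpow u (a : R) e : is_lim_seq u a -> 0 < a -> is_lim_seq (fun n => Rpower (u n) e) (Rpower a e).
Proof.
  intros H Ha. apply (is_lim_seq_continuous (fun y => Rpower y e)); auto.
  apply derivable_continuous_pt. exists (e * Rpower a (e - 1)). apply derivable_pt_lim_power. auto.
Qed.

Lemma lim_opp u (a : R) : is_lim_seq u a -> is_lim_seq (fun n => - u n) (- a).
Proof. intros H. apply (is_lim_seq_opp u a) in H. exact H. Qed.

Ltac limt H := repeat match goal with
  | |- is_lim_seq (fun n => ?c) _ => apply is_lim_seq_const
  | |- is_lim_seq (fun n => _ - _) _ => apply lim_minus
  | |- is_lim_seq (fun n => _ + _) _ => apply lim_plus
  | |- is_lim_seq (fun n => - _) _ => apply lim_opp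
  | |- is_lim_seq (fun n => _ / _) _ => apply lim_div
  | |- is_lim_seq (fun n => _ * _) _ => apply lim_mult
  | |- is_lim_seq (fun n => / _) _ => apply lim_inv
  | |- is_lim_seq (fun n => Rpower _ _) _ => apply lim_Rpow
  | |- is_lim_seq (fun n => _ _ _) _ => apply H
  end.

Lemma lim_Cd al k (dn : nat -> nat -> R) (ds : nat -> R) i : (1 <= k)%nat -> (1 <= i <= S k)%nat ->
  (forall j, is_lim_seq (fun n => dn n j) (ds j)) -> (forall j, (j <= k)%nat -> 0 < ds j) ->
  (forall j, ds j - ds (S j) = 1) ->
  is_lim_seq (fun n => Cd al k (dn n) i) (Cd al k ds i).
Proof.
  intros Hk Hi Hl Hp H1.
  assert (H2 : forall j, (1 <= j)%nat -> ds (pred j) - ds (S j) <> 0).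
  { intros j Hj. destruct j. lia. simpl. assert (A1 := H1 j). assert (A2 := H1 (S j)). lra. }
  assert (H3 : forall j, (1 <= j)%nat -> ds (pred j) - ds j <> 0).
  { intros j Hj. destruct j. lia. simpl. specialize (H1 j). lra. }
  unfold Cd. destruct (Nat.eqb i 1) eqn:E1.
  - unfold Ad, Bd. limt Hl; try (apply Hp; simpl; lia); try (apply H2; lia); try (apply H3; lia). try (assert (A := H1 0%nat); lra).
  - destruct (andb _ _) eqn:E2.
    + apply andb_true_iff in E2. destruct E2 as [E2 E3]. apply Nat.leb_le in E2, E3.
      unfold Ad, Bd. limt Hl; try (apply Hp; lia); try (apply H2; lia); try (apply H3; lia).
    + destruct (Nat.eqb i (S k)).
      * unfold Ad, Bd. limt Hl; try (apply Hp; lia); try (apply H2; lia); try (specialize (H1 k); lra).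
      * apply is_lim_seq_const.
Qed.

Lemma Ad_eval al d i x : d (pred i) = x + 1 -> d i = x -> Ad al d i = Af al x.
Proof. intros E1 E2. unfold Ad, Af, Fp. rewrite E1, E2. reflexivity. Qed.

Lemma Bd_eval al d i x : al < 2 -> d (pred i) = x + 1 -> d i = x -> d (S i) = x - 1 -> Bd al d i = Bf al x.
Proof.
  intros Hal E1 E2 E3. unfold Bd, Bf, Phi, Fp. rewrite E1, E2, E3.
  replace (x + 1 - (x - 1)) with 2 by ring. replace (x + 1 - x) with 1 by ring. field. lra.
Qed.

Section DS.
Variable al : R.
Hypothesis Hal : 0 < al < 1.
Variable k : nat.
Hypothesis Hk : (1 <= k)%nat.
Let sg := 1 - al / 2.
Definition ds j := INR k + sg - INR j.

Lemma ds_S j : ds (S j) = ds j - 1.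
Proof. unfold ds. rewrite S_INR. ring. Qed.
Lemma ds_pred j : (1 <= j)%nat -> ds (pred j) = ds j + 1.
Proof. intros. destruct j. lia. simpl pred. rewrite ds_S. ring. Qed.
Lemma ds_pos j : (j <= k)%nat -> 0 < ds j.
Proof. intros. unfold ds, sg. assert (INR j <= INR k) by (apply le_INR; auto). lra. Qed.
Lemma ds_k : ds k = sg.
Proof. unfold ds. ring. Qed.

Lemma Cd_ds_1 : Cd al k ds 1 = Af al (ds 1) - Bf al (ds 1).
Proof.
  assert (E0 : ds 0 = ds 1 + 1) by (rewrite (ds_S 0); ring).
  assert (E2 : ds 2 = ds 1 - 1) by apply ds_S.
  unfold Cd. simpl Nat.eqb. cbv iota.
  rewrite (Ad_eval al ds 1 (ds 1) E0 eq_refl), (Bd_eval al ds 1 (ds 1) ltac:(lra) E0 eq_refl E2).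
  rewrite E0. replace (ds 1%nat + 1 - ds 1%nat) with 1 by ring. field.
Qed.

Lemma Cd_ds_mid i : (2 <= i <= k)%nat -> Cd al k ds i = Af al (ds i) + Bf al (ds i + 1) - Bf al (ds i).
Proof.
  intros Hi. unfold Cd.
  replace (Nat.eqb i 1) with false by (symmetry; apply Nat.eqb_neq; lia).
  replace (andb (2 <=? i)%nat (i <=? k)%nat) with true by (symmetry; apply andb_true_iff; split; apply Nat.leb_le; lia).
  assert (E0 : ds (pred i) = ds i + 1) by (apply ds_pred; lia).
  assert (E1 : ds (pred (pred i)) = ds i + 1 + 1) by (rewrite !ds_pred by lia; ring).
  assert (E2 : ds (S i) = ds i - 1) by apply ds_S.
  assert (E3 : ds (S (pred i)) = ds i + 1 - 1) by (replace (S (pred i)) with i by lia; ring).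
  rewrite (Ad_eval al ds i (ds i) E0 eq_refl), (Bd_eval al ds i (ds i) ltac:(lra) E0 eq_refl E2).
  rewrite (Bd_eval al ds (pred i) (ds i + 1) ltac:(lra) E1 E0 E3).
  rewrite E0. replace (ds i + 1 - ds i) with 1 by ring. field.
Qed.

Lemma Cd_ds_last : Cd al k ds (S k) = Bf al (ds k) + Fp al (ds k).
Proof.
  unfold Cd.
  replace (Nat.eqb (S k) 1) with false by (symmetry; apply Nat.eqb_neq; lia).
  replace (andb (2 <=? S k)%nat (S k <=? k)%nat) with false by (symmetry; apply andb_false_iff; right; apply Nat.leb_gt; lia).
  rewrite Nat.eqb_refl.
  assert (E0 : ds (pred k) = ds k + 1) by (apply ds_pred; lia).
  rewrite (Bd_eval al ds k (ds k) ltac:(lra) E0 eq_refl (ds_S k)).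
  rewrite ds_S. replace (ds k - (ds k - 1)) with 1 by ring. unfold Fp. field.
Qed.

Lemma U1 : 0 < Cd al k ds 1.
Proof. rewrite Cd_ds_1. apply AB_pos; auto. apply ds_pos; auto. Qed.

Lemma U2 i : (2 <= i <= k)%nat -> 0 < Cd al k ds i - Cd al k ds (pred i).
Proof.
  intros Hi. rewrite (Cd_ds_mid i Hi).
  assert (Hy : 0 < ds i) by (apply ds_pos; lia).
  assert (HE := E_pos al Hal (ds i) Hy).
  destruct (Nat.eq_dec i 2).
  - subst. simpl pred. rewrite Cd_ds_1. assert (E : ds 1 = ds 2 + 1) by (apply (ds_pred 2); lia). rewrite E.
    assert (HB := Bf_pos al Hal (ds 2 + 1 + 1) ltac:(lra)). lra.
  - rewrite (Cd_ds_mid (pred i)) by lia. rewrite ds_pred by lia. lra.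
Qed.

Lemma U3 : sg * sg * Cd al k ds k < (2 * sg - 1) * Cd al k ds (S k).
Proof.
  assert (Hs : 0 < sg < 1) by (unfold sg; lra).
  rewrite Cd_ds_last, ds_k.
  replace (2 * sg - 1) with (1 - al) by (unfold sg; field).
  assert (HL := last_ineq al Hal sg Hs).
  assert (HB := Bf_pos al Hal sg ltac:(lra)).
  assert (Cd al k ds k <= Af al sg).
  { destruct (Nat.eq_dec k 1).
    - assert (EC : Cd al k ds k = Cd al k ds 1) by (f_equal; exact e). rewrite EC, Cd_ds_1.
      assert (ED : ds 1 = sg) by (rewrite <- e; apply ds_k). rewrite ED. lra.
    - rewrite Cd_ds_mid by lia. rewrite ds_k.
      assert (HD := Bf_decr al Hal sg ltac:(lra)). lra. }
  assert (0 <= sg * sg) by nra. nra.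
Qed.
End DS.

Lemma ln1p_lim (c : R) (e : nat -> R) : is_lim_seq e 0 -> (forall n, 0 < e n) ->
  is_lim_seq (fun n => ln (1 + c * e n) / e n) c.
Proof.
  intros He Hp. destruct (Req_dec c 0) as [Ec|Ec].
  - subst c. apply (is_lim_seq_ext (fun _ => 0)). intros n. rewrite Rmult_0_l, Rplus_0_r, ln_1. unfold Rdiv. ring.
    apply is_lim_seq_const.
  - apply is_lim_seq_spec. intros eps.
    assert (Hc : 0 < Rabs c) by (apply Rabs_pos_lt; auto).
    destruct (derivable_pt_lim_ln 1 ltac:(lra) (eps / Rabs c)) as [del Hdel].
    { apply Rdiv_lt_0_compat; [apply cond_pos|auto]. }
    apply is_lim_seq_spec in He.
    assert (Hd : 0 < del / Rabs c) by (apply Rdiv_lt_0_compat; [apply cond_pos|auto]).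
    destruct (He (mkposreal _ Hd)) as [N HN].
    exists N. intros n Hn. specialize (HN n Hn). simpl in HN. rewrite Rminus_0_r in HN.
    assert (Hen := Hp n).
    assert (Hh : c * e n <> 0) by (apply Rmult_integral_contrapositive; split; lra).
    assert (Hhd : Rabs (c * e n) < del).
    { rewrite Rabs_mult. rewrite (Rabs_right (e n)) in HN |- * by lra.
      apply (Rmult_lt_compat_l (Rabs c)) in HN; auto. replace (Rabs c * (del / Rabs c)) with (pos del) in HN by (field; lra). lra. }
    specialize (Hdel (c * e n) Hh Hhd).
    rewrite ln_1, Rminus_0_r, Rinv_1 in Hdel.
    replace (ln (1 + c * e n) / e n - c) with (c * (ln (1 + c * e n) / (c * e n) - 1)) by (field; lra).
    rewrite Rabs_mult.
    apply (Rmult_lt_compat_l (Rabs c)) in Hdel; auto.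
    replace (Rabs c * (eps / Rabs c)) with (pos eps) in Hdel by (field; lra). exact Hdel.
Qed.

Lemma ev_pos u (L : R) : is_lim_seq u L -> 0 < L -> exists N, forall n, (N <= n)%nat -> 0 < u n.
Proof.
  intros H HL. apply is_lim_seq_spec in H. destruct (H (mkposreal _ HL)) as [N HN].
  exists N. intros n Hn. specialize (HN n Hn). simpl in HN.
  apply Rabs_def2 in HN. lra.
Qed.

Lemma ev_forall (P : nat -> nat -> Prop) m :
  (forall i, (i <= m)%nat -> exists N, forall n, (N <= n)%nat -> P i n) ->
  exists N, forall n, (N <= n)%nat -> forall i, (i <= m)%nat -> P i n.
Proof.
  induction m; intros H.
  - destruct (H 0%nat ltac:(lia)) as [N HN]. exists N. intros n Hn i Hi.
    replace i with 0%nat by lia. auto.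
  - destruct IHm as [N1 H1]. intros; apply H; lia.
    destruct (H (S m) ltac:(lia)) as [N2 H2]. exists (max N1 N2). intros n Hn i Hi.
    destruct (Nat.eq_dec i (S m)). subst; apply H2; lia. apply H1; lia.
Qed.

Lemma lim_e (C : R) : is_lim_seq (fun n => C / INR (S n)) 0.
Proof.
  replace (Finite 0) with (Rbar_mult C 0) by (simpl; f_equal; ring).
  apply (is_lim_seq_scal_l (fun n => / INR (S n)) C 0).
  assert (H := is_lim_seq_inv (fun n => INR n) p_infty is_lim_seq_INR ltac:(discriminate)).
  simpl in H. apply (is_lim_seq_incr_1 (fun n => / INR n)) in H. exact H.
Qed.

Lemma concl_of_conds (c : nat -> R) (sigma : R) (k : nat) : 1/2 <= sigma -> 0 <= c 1%nat ->
  (forall i, (2 <= i <= k)%nat -> c (pred i) <= c i) ->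
  ((1 <= k)%nat -> sigma * sigma * c k <= (2 * sigma - 1) * c (S k)) ->
  (forall (a b : R) (M : nat), a < b -> (0 < M)%nat ->
     let h := (b - a) / INR M in
     forall v : nat -> nat -> R,
       sum_n_m (fun i => c i * ip1 h M (fun j => v i j - v (pred i) j)
                  (fun j => sigma * v (S k) j + (1 - sigma) * v k j)) 1 (S k)
       >= 1 / 2 * sum_n_m (fun i => c i * (ip1 h M (v i) (v i)
                                         - ip1 h M (v (pred i)) (v (pred i)))) 1 (S k))
  /\
  (forall (L : R) (M : nat), 0 < L -> (0 < M)%nat ->
     let h := 2 * L / INR M in
     forall w : nat -> nat -> nat -> R,
       (forall n : nat, (n <= S k)%nat -> zero_boundary M (w n)) ->
       sum_n_m (fun i => c i * ip2 h M (fun j l => w i j l - w (pred i) j l)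
                  (fun j l => sigma * w (S k) j l + (1 - sigma) * w k j l)) 1 (S k)
       >= 1 / 2 * sum_n_m (fun i => c i * (ip2 h M (w i) (w i)
                                         - ip2 h M (w (pred i)) (w (pred i)))) 1 (S k)).
Proof.
  intros Hs Hc1 Hmon Hlast. split.
  - intros a b M Hab HM h v.
    assert (Hh : 0 <= h). { unfold h. apply Rle_mult_inv_pos. lra. apply lt_0_INR; lia. }
    exact (lift_ineq nat (fun f => sum_n_m f 1 (M - 1))
      (fun f g => sR_plus f g 1 (M-1)) (fun a f => sR_scal a f 1 (M-1))
      (fun f Hf => sR_nonneg f 1 (M-1) (fun k _ => Hf k))
      (fun f g Hfg => sum_n_m_ext f g 1 (M-1) Hfg)
      h Hh c v sigma k Hs Hc1 Hmon Hlast).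
  - intros L M HL HM h w _.
    assert (Hh : 0 <= h ^ 2). { apply pow2_ge_0. }
    set (Lam := fun f : nat * nat -> R => sum_n_m (fun j => sum_n_m (fun l => f (j, l)) 1 (M-1)) 1 (M-1)).
    assert (Hadd : forall f g, Lam (fun x => f x + g x) = Lam f + Lam g).
    { intros f g. unfold Lam. rewrite <- sR_plus. apply sR_ext. intros. apply sR_plus. }
    assert (Hscal : forall a f, Lam (fun x => a * f x) = a * Lam f).
    { intros a0 f. unfold Lam. rewrite <- sR_scal. apply sR_ext. intros. apply sR_scal. }
    assert (Hpos : forall f, (forall x, 0 <= f x) -> 0 <= Lam f).
    { intros f Hf. unfold Lam. apply sR_nonneg. intros. apply sR_nonneg. intros. apply Hf. }
    assert (Hext : forall f g, (forall x, f x = g x) -> Lam f = Lam g).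
    { intros f g Hfg. unfold Lam. apply sR_ext. intros. apply sR_ext. intros. apply Hfg. }
    exact (lift_ineq (nat * nat) Lam Hadd Hscal Hpos Hext (h ^ 2) Hh c
      (fun i p => w i (fst p) (snd p)) sigma k Hs Hc1 Hmon Hlast).
Qed.

Lemma inv_nonneg x : 0 <= x -> 0 <= / x.
Proof.
  intros H. destruct (Req_dec x 0). subst. rewrite Rinv_0. lra.
  apply Rlt_le, Rinv_0_lt_compat. lra.
Qed.

Lemma ln_pos_gt x y : 0 < y < x -> 0 < ln (x / y).
Proof.
  intros H. rewrite <- ln_1. apply ln_increasing. lra.
  apply (Rmult_lt_reg_r y). lra. field_simplify; lra.
Qed.

Theorem lemma3p2 (alpha : R) (Halpha : 0 < alpha < 1) (ta T : R)
  (Hat : 0 < ta) (HT : ta < T) (k : nat) :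
  let sigma := 1 - alpha / 2 in
  exists tau0 : R, 0 < tau0 /\
  forall N : nat, (0 < N)%nat -> (k < N)%nat ->
  let tau := (T - ta) / INR N in
  tau < tau0 ->
  let c := fun i => c_coef alpha sigma ta tau i k in
  (forall (a b : R) (M : nat), a < b -> (0 < M)%nat ->
     let h := (b - a) / INR M in
     forall v : nat -> nat -> R,
       sum_n_m (fun i => c i * ip1 h M (fun j => v i j - v (pred i) j)
                  (fun j => sigma * v (S k) j + (1 - sigma) * v k j)) 1 (S k)
       >= 1 / 2 * sum_n_m (fun i => c i * (ip1 h M (v i) (v i)
                                         - ip1 h M (v (pred i)) (v (pred i)))) 1 (S k))
  /\
  (forall (L : R) (M : nat), 0 < L -> (0 < M)%nat ->
     let h := 2 * L / INR M in
     forall w : nat -> nat -> nat -> R,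
       (forall n : nat, (n <= S k)%nat -> zero_boundary M (w n)) ->
       sum_n_m (fun i => c i * ip2 h M (fun j l => w i j l - w (pred i) j l)
                  (fun j l => sigma * w (S k) j l + (1 - sigma) * w k j l)) 1 (S k)
       >= 1 / 2 * sum_n_m (fun i => c i * (ip2 h M (w i) (w i)
                                         - ip2 h M (w (pred i)) (w (pred i)))) 1 (S k)).
Proof.
  intros sigma.
  assert (Hsg : 1/2 <= sigma /\ 0 < sigma < 1) by (unfold sigma; lra).
  assert (HG : 0 <= Gamma (2 - alpha)) by (apply Gamma_nonneg; lra).
  assert (HiG : 0 <= / Gamma (2 - alpha)) by (apply inv_nonneg; auto).
  destruct k as [|k'].
  - exists 1. split. lra. intros N HN _ tau Htau c.
    assert (Htau0 : 0 < tau) by (unfold tau; apply Rdiv_lt_0_compat; [lra | apply lt_0_INR; lia]).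
    apply concl_of_conds. lra.
    + unfold c, c_coef. simpl Nat.eqb. cbv iota zeta.
      unfold Rdiv. apply Rmult_le_pos. apply Rlt_le, Rpower_pos.
      apply inv_nonneg. apply Rmult_le_pos. auto. apply Rlt_le, ln_pos_gt.
      unfold tgrid. lra.
    + intros; lia.
    + intros; lia.
  - set (K := S k').
    set (tn := fun n : nat => (T - ta) / INR (S n)).
    set (en := fun n : nat => tn n / ta).
    set (x0 := INR K + sigma).
    set (Dn := fun n j => ln (tgrid ta (tn n) x0 / tgrid ta (tn n) (INR j))).
    set (dn := fun n j => Dn n j / en n).
    assert (Htn : forall n, 0 < tn n).
    { intros n. unfold tn. apply Rdiv_lt_0_compat. lra. apply lt_0_INR; lia. }
    assert (Hen : forall n, 0 < en n). { intros n. unfold en. apply Rdiv_lt_0_compat; auto. }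
    assert (Hx0 : 0 < x0). { unfold x0. assert (0 <= INR K) by apply pos_INR. lra. }
    assert (Hlim : forall j, is_lim_seq (fun n => dn n j) (ds alpha K j)).
    { intros j.
      apply (is_lim_seq_ext (fun n => ln (1 + x0 * en n) / en n - ln (1 + INR j * en n) / en n)).
      { intros n. unfold dn, Dn. unfold tgrid.
        assert (E1 : ta + x0 * tn n = ta * (1 + x0 * en n)) by (unfold en; field; lra).
        assert (E2 : ta + INR j * tn n = ta * (1 + INR j * en n)) by (unfold en; field; lra).
        rewrite E1, E2.
        assert (0 < 1 + x0 * en n) by (specialize (Hen n); nra).
        assert (0 < 1 + INR j * en n) by (specialize (Hen n); assert (0 <= INR j) by apply pos_INR; nra).
        replace (ta * (1 + x0 * en n) / (ta * (1 + INR j * en n))) with ((1 + x0 * en n) / (1 + INR j * en n)) by (field; lra).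
        rewrite ln_div by lra. field. specialize (Hen n); lra. }
      unfold ds. fold sigma. fold x0.
      assert (Hel : is_lim_seq en 0).
      { apply (is_lim_seq_ext (fun n => ((T - ta) / ta) / INR (S n))). intros n. unfold en, tn. field.
        split; (lra || (apply not_0_INR; lia)). apply lim_e. }
      apply lim_minus; apply ln1p_lim; auto. }
    assert (HK : (1 <= K)%nat) by (unfold K; lia).
    assert (Hds : forall j, (j <= K)%nat -> 0 < ds alpha K j) by (intros; apply ds_pos; auto).
    assert (Hds1 : forall j, ds alpha K j - ds alpha K (S j) = 1) by (intros; rewrite ds_S; ring).
    assert (LC : forall i, (1 <= i <= S K)%nat -> is_lim_seq (fun n => Cd alpha K (dn n) i) (Cd alpha K (ds alpha K) i)).
    { intros i Hi. apply lim_Cd; auto. }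
    destruct (ev_pos _ _ (LC 1%nat ltac:(lia)) (U1 alpha Halpha K HK)) as [N1 HN1].
    assert (EV2 : exists N, forall n, (N <= n)%nat -> forall i, (i <= K)%nat ->
        (2 <= i)%nat -> 0 < Cd alpha K (dn n) i - Cd alpha K (dn n) (pred i)).
    { apply (ev_forall (fun i n => (2 <= i)%nat -> 0 < Cd alpha K (dn n) i - Cd alpha K (dn n) (pred i))).
      intros i Hi. destruct (le_lt_dec 2 i).
      - destruct (ev_pos _ _ (lim_minus _ _ _ _ (LC i ltac:(lia)) (LC (pred i) ltac:(lia)))
            (U2 alpha Halpha K HK i ltac:(lia))) as [N HN].
        exists N. intros n Hn _. apply HN; auto.
      - exists 0%nat. intros. lia. }
    destruct EV2 as [N2 HN2].
    assert (L3 := lim_minus _ _ _ _ (lim_mult _ _ _ _ (is_lim_seq_const (2 * sigma - 1)) (LC (S K) ltac:(lia)))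
                               (lim_mult _ _ _ _ (is_lim_seq_const (sigma * sigma)) (LC K ltac:(lia)))).
    destruct (ev_pos _ _ L3) as [N3 HN3].
    { assert (U := U3 alpha Halpha K HK). fold sigma in U. lra. }
    set (N0 := max N1 (max N2 N3)).
    exists ((T - ta) / INR (S N0)). split.
    { apply Rdiv_lt_0_compat. lra. apply lt_0_INR; lia. }
    intros N HN _ tau Htau c.
    assert (HNN : (S N0 < N)%nat).
    { apply INR_lt. destruct (Rlt_le_dec (INR (S N0)) (INR N)) as [E|E]; auto.
      exfalso. assert (0 < INR N) by (apply lt_0_INR; lia).
      assert (/ INR (S N0) <= / INR N) by (apply Rinv_le_contravar; auto).
      unfold tau in Htau. unfold Rdiv in Htau. assert (0 < T - ta) by lra. nra. }
    destruct N as [|n]. lia.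
    assert (Hn : (N0 <= n)%nat) by lia.
    set (kap := / Gamma (2 - alpha) * (Rpower (en n) (1 - alpha) / en n)).
    assert (Hkap : 0 <= kap).
    { unfold kap. apply Rmult_le_pos; auto. apply Rlt_le, Rdiv_lt_0_compat. apply Rpower_pos. auto. }
    assert (Hdnpos : forall j, (j <= K)%nat -> 0 < dn n j).
    { intros j Hj. unfold dn. apply Rdiv_lt_0_compat; auto. unfold Dn. apply ln_pos_gt.
      assert (INR j <= INR K) by (apply le_INR; auto). specialize (Htn n).
      assert (0 <= INR j) by apply pos_INR. unfold tgrid, x0. split. nra. nra. }
    assert (Hc : forall i, c i = kap * Cd alpha K (dn n) i).
    { intros i. unfold c. unfold K. rewrite c_coef_eq by (first [assumption | lra | (unfold tau; apply Rdiv_lt_0_compat; [lra | apply lt_0_INR; lia])]). fold K.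
      replace (fun j => ln (tgrid ta tau (INR K + sigma) / tgrid ta tau (INR j))) with (fun j => en n * dn n j).
      rewrite Cd_hom by auto. unfold kap. ring.
      apply functional_extensionality. intros j. unfold dn, Dn, x0, tn, tau. field. specialize (Hen n). lra. }
    apply concl_of_conds. lra.
    + rewrite Hc. apply Rmult_le_pos; auto. apply Rlt_le, HN1. lia.
    + intros i Hi. rewrite !Hc. apply Rmult_le_compat_l; auto.
      assert (H := HN2 n ltac:(lia) i ltac:(unfold K; lia) ltac:(lia)). lra.
    + intros _. rewrite !Hc. assert (H := HN3 n ltac:(lia)). cbv beta in H.
      assert (0 <= kap * ((2 * sigma - 1) * Cd alpha K (dn n) (S K) - sigma * sigma * Cd alpha K (dn n) K)) by
        (apply Rmult_le_pos; lra).
      fold K. nra.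
Qed.
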